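(* Let $n\ge1$ and let $H_n$ be the pyrene system with $n$ pyrene fragments. Then (1) $f(H_n)=n$; (2) $F(H_n)=2n$; (3) $\mathrm{Spec}_f(H_n)=[n,2n]$, i.e. the set of forcing numbers of perfect matchings of $H_n$ is exactly $\{n,n+1,\dots,2n\}$.
   Context: Pyrene system: draw the hexagonal lattice so that every hexagon has two vertical sides; horizontally adjacent hexagons then share a vertical edge. For $n\ge1$, $H_n$ is the hexagonal system (the plane graph formed by the vertices and edges of the following $4n$ hexagons) consisting of a horizontal linear row of $2n$ hexagons $h_{1,1},h_{1,2},\dots,h_{n,1},h_{n,2}$, consecutive ones sharing a vertical edge, together with, for each $i$, a hexagon $s_{i,1}$ directly above and a hexagon $s_{i,2}$ directly below the common edge of $h_{i,1}$ and $h_{i,2}$ (each sharing an edge with both $h_{i,1}$ and $h_{i,2}$). For a perfect matching $M$ of $G$, a forcing set is a subset $S\subseteq M$ contained in no other perfect matching of $G$, and the forcing number $f(G,M)$ is the minimum size of a forcing set. $f(G)$ and $F(G)$ denote the minimum and maximum of $f(G,M)$ over all perfect matchings $M$ of $G$, and $\mathrm{Spec}_f(G)$ is the set of values $f(G,M)$ over all perfect matchings $M$. *)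

(* Defs.v *)
From mathcomp Require Import all_boot.
Set Implicit Arguments. Unset Strict Implicit. Unset Printing Implicit Defensive.

(* ---------- Generic notions: a graph is given by its edge set E, a set of
   2-element vertex sets over a finite type V; its vertex set is cover E. *)

Definition is_perfect_matching (V : finType) (E M : {set {set V}}) : bool :=
  (M \subset E) && [forall v in cover E, #|[set e in M | v \in e]| == 1].

Definition is_forcing_set (V : finType) (E M S : {set {set V}}) : bool :=
  (S \subset M) &&
  [forall M' : {set {set V}},
     (is_perfect_matching E M' && (S \subset M')) ==> (M' == M)].

(* f(G,M): minimum size of a forcing set of M (M itself is always one,
   so the default #|M| is never the answer for a perfect matching M unless
   it is attained). *)
Definition forcing_number (V : finType) (E M : {set {set V}}) : nat :=
  \big[minn/#|M|]_(S : {set {set V}} | is_forcing_set E M S) #|S|.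

Definition min_forcing_number (V : finType) (E : {set {set V}}) : nat :=
  \big[minn/#|E|]_(M : {set {set V}} | is_perfect_matching E M)
     forcing_number E M.

Definition max_forcing_number (V : finType) (E : {set {set V}}) : nat :=
  \max_(M : {set {set V}} | is_perfect_matching E M) forcing_number E M.

Definition in_forcing_spectrum (V : finType) (E : {set {set V}}) (k : nat)
  : Prop :=
  exists M : {set {set V}}, is_perfect_matching E M /\ forcing_number E M = k.

(* Lattice vertices are integer points (a,b); horizontal edges (a,b)-(a+1,b);
   vertical edges (a,b)-(a,b+1) exactly when a+b is odd.  A hexagon with
   lower-left corner (x,y), x+y odd, has the six vertices
   (x..x+2) x (y..y+1); its two vertical sides are at a = x and a = x+2.
   Horizontally adjacent hexagons (x,y),(x+2,y) share a vertical edge, and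
   hexagons (x+1,y+1) and (x+1,y-1) lie directly above / below that common
   edge, each sharing one edge with both. *)

Definition PV (n : nat) := ('I_(4 * n).+1 * 'I_4)%type.

Definition pv (n a b : nat) : PV n := (inord a, inord b).

Definition hexagon (n x y : nat) : {set {set PV n}} :=
  [set [set pv n x y; pv n x.+1 y];
       [set pv n x.+1 y; pv n x.+2 y];
       [set pv n x y.+1; pv n x.+1 y.+1];
       [set pv n x.+1 y.+1; pv n x.+2 y.+1];
       [set pv n x y; pv n x y.+1];
       [set pv n x.+2 y; pv n x.+2 y.+1]].

(* H_n: for i < n (0-based), h_{i,1} at (4i,1), h_{i,2} at (4i+2,1),
   s_{i,1} at (4i+1,2) (above), s_{i,2} at (4i+1,0) (below). All coordinates
   stay within 0..4n x 0..3, so inord is exact. *)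
Definition pyrene_edges (n : nat) : {set {set PV n}} :=
  \bigcup_(i < n)
    (hexagon n (4 * i) 1 :|: hexagon n (4 * i + 2) 1 :|:
     hexagon n (4 * i + 1) 2 :|: hexagon n (4 * i + 1) 0).

(* Main.v *)
Require Import Defs.
From mathcomp Require Import all_boot zify.
Set Implicit Arguments. Unset Strict Implicit. Unset Printing Implicit Defensive.

Lemma set3P (T : finType) (x a b c : T) :
  reflect [\/ x = a, x = b | x = c] (x \in [set a; b; c]).
Proof.
rewrite !inE; apply: (iffP idP).
- by case/orP=> [/orP[]|] /eqP ->; [constructor 1|constructor 2|constructor 3].
- by case=> ->; rewrite eqxx ?orbT.
Qed.

Section Generic.
Variables (T : finType) (E : {set {set T}}).

Lemma pm_sub (M : {set {set T}}) : is_perfect_matching E M -> M \subset E.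
Proof. by case/andP. Qed.

Lemma pm_card (M : {set {set T}}) v : is_perfect_matching E M -> v \in cover E ->
  #|[set e in M | v \in e]| = 1.
Proof. by case/andP=> _ /forall_inP H Hv; apply/eqP; apply: H. Qed.

Lemma pm_ex (M : {set {set T}}) v : is_perfect_matching E M -> v \in cover E ->
  exists e, e \in M /\ v \in e.
Proof.
move=> HM Hv; move: (pm_card HM Hv) => /eqP /cards1P [e He].
have : e \in [set e in M | v \in e] by rewrite He set11.
by rewrite inE => /andP[H1 H2]; exists e.
Qed.

Lemma pm_uniq (M : {set {set T}}) v e f : is_perfect_matching E M -> v \in cover E ->
  e \in M -> f \in M -> v \in e -> v \in f -> e = f.
Proof.
move=> HM Hv eM fM ve vf; move: (pm_card HM Hv) => /eqP /cards1P [g Hg].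
have : e \in [set e in M | v \in e] by rewrite inE eM ve.
have : f \in [set e in M | v \in e] by rewrite inE fM vf.
by rewrite Hg !inE => /eqP -> /eqP ->.
Qed.

Lemma cover_sub (M : {set {set T}}) v e : is_perfect_matching E M -> e \in M -> v \in e ->
  v \in cover E.
Proof.
move=> HM eM ve; apply/bigcupP; exists e => //.
by apply: (subsetP (pm_sub HM)).
Qed.

Lemma pm_of (M : {set {set T}}) : M \subset E ->
  (forall v, v \in cover E -> exists e, e \in M /\ v \in e) ->
  (forall v e f, v \in cover E -> e \in M -> f \in M -> v \in e -> v \in f -> e = f) ->
  is_perfect_matching E M.
Proof.
move=> HS Hex Hu; apply/andP; split=> //; apply/forall_inP=> v Hv.
have [e [eM ve]] := Hex v Hv.
apply/cards1P; exists e; apply/setP=> f; rewrite !inE.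
apply/andP/eqP=> [[fM vf]|->]; last by [].
exact: (Hu v f e).
Qed.

Lemma pm_incl (M M' : {set {set T}}) : (forall e, e \in E -> e != set0) ->
  is_perfect_matching E M -> is_perfect_matching E M' -> M \subset M' -> M = M'.
Proof.
move=> Hne HM HM' Hs; apply/eqP; rewrite eqEsubset Hs /=.
apply/subsetP=> e eM'.
have eE : e \in E by apply: (subsetP (pm_sub HM')).
case/set0Pn: (Hne e eE) => v ve.
have Hv : v \in cover E by apply/bigcupP; exists e.
have [f [fM vf]] := pm_ex HM Hv.
have : f = e by apply: (pm_uniq HM' Hv) => //; apply: (subsetP Hs).
by move=> <-.
Qed.

Lemma forcing_eq (M S M' : {set {set T}}) : is_forcing_set E M S ->
  is_perfect_matching E M' -> S \subset M' -> M' = M.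
Proof.
case/andP=> _ /forallP H HM' Hs; have := H M'.
by rewrite HM' Hs /= => /eqP.
Qed.

Lemma forcingI (M S : {set {set T}}) : S \subset M ->
  (forall M', is_perfect_matching E M' -> S \subset M' -> M' = M) ->
  is_forcing_set E M S.
Proof.
move=> HS H; apply/andP; split=> //; apply/forallP=> M'.
by apply/implyP=> /andP[H1 H2]; rewrite (H M' H1 H2).
Qed.

Lemma pm_forcing_self (M : {set {set T}}) : (forall e, e \in E -> e != set0) ->
  is_perfect_matching E M -> is_forcing_set E M M.
Proof.
move=> Hne HM; apply: forcingI => // M' HM' Hs.
by apply/esym/pm_incl.
Qed.

Lemma flip_pm (M A B : {set {set T}}) : is_perfect_matching E M -> A \subset M -> B \subset E ->
  (forall v, (exists2 a, a \in A & v \in a) <-> (exists2 b, b \in B & v \in b)) ->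
  (forall v b1 b2, b1 \in B -> b2 \in B -> v \in b1 -> v \in b2 -> b1 = b2) ->
  is_perfect_matching E ((M :\: A) :|: B).
Proof.
move=> HM HA HB Hc Hm; apply: pm_of.
- rewrite subUset HB andbT; apply: subset_trans (pm_sub HM).
  exact: subsetDl.
- move=> v Hv; case: (boolP [exists a in A, v \in a]).
  + case/exists_inP=> a aA va.
    have [b bB vb] : exists2 b, b \in B & v \in b by apply/Hc; exists a.
    by exists b; rewrite inE bB orbT.
  + move=> Hn; have [e [eM ve]] := pm_ex HM Hv; exists e; split=> //.
    rewrite !inE eM andbT; apply/orP; left; apply/negP=> eA.
    by move/negP: Hn; apply; apply/exists_inP; exists e.
- move=> v e f Hv; rewrite !inE => /orP[/andP[eA eM]|eB] /orP[/andP[fA fM]|fB] ve vf.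
  + exact: (pm_uniq HM Hv).
  + have [a aA va] : exists2 a, a \in A & v \in a by apply/Hc; exists f.
    have := pm_uniq HM Hv eM (subsetP HA a aA) ve va.
    by move=> Ea; rewrite Ea aA in eA.
  + have [a aA va] : exists2 a, a \in A & v \in a by apply/Hc; exists e.
    have := pm_uniq HM Hv fM (subsetP HA a aA) vf va.
    by move=> Ea; rewrite Ea aA in fA.
  + exact: (Hm v).
Qed.

Section Hex.
Variables (v1 v2 v3 v4 v5 v6 : T).
Hypothesis Hu : uniq [:: v1; v2; v3; v4; v5; v6].
Let A := [set [set v1; v2]; [set v3; v4]; [set v5; v6]].
Let B := [set [set v2; v3]; [set v4; v5]; [set v6; v1]].

Lemma hex_cover v : (exists2 a, a \in A & v \in a) <-> (exists2 b, b \in B & v \in b).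
Proof.
split=> [[a]|[b]] /set3P[]-> /set2P[]->.
- by exists [set v6; v1]; rewrite !inE ?eqxx ?orbT.
- by exists [set v2; v3]; rewrite !inE ?eqxx ?orbT.
- by exists [set v2; v3]; rewrite !inE ?eqxx ?orbT.
- by exists [set v4; v5]; rewrite !inE ?eqxx ?orbT.
- by exists [set v4; v5]; rewrite !inE ?eqxx ?orbT.
- by exists [set v6; v1]; rewrite !inE ?eqxx ?orbT.
- by exists [set v1; v2]; rewrite !inE ?eqxx ?orbT.
- by exists [set v3; v4]; rewrite !inE ?eqxx ?orbT.
- by exists [set v3; v4]; rewrite !inE ?eqxx ?orbT.
- by exists [set v5; v6]; rewrite !inE ?eqxx ?orbT.
- by exists [set v5; v6]; rewrite !inE ?eqxx ?orbT.
- by exists [set v1; v2]; rewrite !inE ?eqxx ?orbT.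
Qed.

Lemma hex_match v b1 b2 : b1 \in B -> b2 \in B -> v \in b1 -> v \in b2 -> b1 = b2.
Proof.
have Hu' := Hu; rewrite /= !inE in Hu'.
move=> /set3P[]-> /set3P[]-> // /set2P[] E1 /set2P[] E2;
  subst; move: Hu'; rewrite ?eqxx ?orbT ?andbF //.
Qed.

Lemma hex_flip (M : {set {set T}}) : is_perfect_matching E M -> A \subset M -> B \subset E ->
  is_perfect_matching E ((M :\: A) :|: B).
Proof. move=> HM HA HB; apply: flip_pm => //; [exact: hex_cover | exact: hex_match]. Qed.

Lemma hex_force (M S : {set {set T}}) : is_perfect_matching E M -> is_forcing_set E M S ->
  [set v1; v2] \in M -> [set v3; v4] \in M -> [set v5; v6] \in M ->
  [set v2; v3] \in E -> [set v4; v5] \in E -> [set v6; v1] \in E ->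
  [\/ [set v1; v2] \in S, [set v3; v4] \in S | [set v5; v6] \in S].
Proof.
move=> HM HS h12 h34 h56 h23 h45 h61.
have HA : A \subset M by apply/subsetP=> e /set3P[]->.
have HB : B \subset E by apply/subsetP=> e /set3P[]->.
have HM' := hex_flip HM HA HB.
case: (boolP [exists a in A, a \in S]).
  case/exists_inP=> a /set3P[]-> H.
  - exact: Or31.
  - exact: Or32.
  - exact: Or33.
move=> Hn; exfalso.
have HSM : S \subset (M :\: A) :|: B.
  apply/subsetP=> s sS; rewrite in_setU; apply/orP; left.
  have sM : s \in M by apply: (subsetP (proj1 (andP HS))).
  rewrite in_setD sM andbT; apply/negP=> sA; move/negP: Hn; apply.
  by apply/exists_inP; exists s.
have Eq := forcing_eq HS HM' HSM.
have h23M : [set v2; v3] \in M by rewrite -Eq in_setU; apply/orP; right; apply/set3P; constructor 1.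
have Hv2 : v2 \in cover E by apply: (cover_sub HM h12); rewrite !inE eqxx orbT.
have Ee := pm_uniq HM Hv2 h12 h23M.
have : v3 \in [set v1; v2] by rewrite Ee ?inE ?eqxx ?orbT.
have Hu' := Hu; rewrite /= !inE in Hu'.
by move/set2P=> [] E3; subst; move: Hu'; rewrite ?eqxx ?orbT ?andbF.
Qed.
End Hex.

End Generic.

Section Adj.
Variable n : nat.
Definition hok a b : bool :=
  (((b == 1) || (b == 2)) && (a < 4 * n)) ||
  (((b == 0) || (b == 3)) && (a < 4 * n) && ((a %% 4 == 1) || (a %% 4 == 2))).
Definition vok a b : bool :=
  ((b == 1) && (a %% 2 == 0) && (a <= 4 * n)) ||
  (((b == 0) || (b == 2)) && (a %% 2 == 1) && (a < 4 * n)).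
Definition adjO a b c d : bool :=
  ((c == a + 1) && (d == b) && hok a b) || ((c == a) && (d == b + 1) && vok a b).
Definition adjS a b c d : bool := adjO a b c d || adjO c d a b.
Definition inG a b : bool :=
  (((b == 1) || (b == 2)) && (a <= 4 * n)) ||
  (((b == 0) || (b == 3)) && (a < 4 * n) && (a %% 4 != 0)).
End Adj.

Record rel_ok (n : nat) (R : nat -> nat -> nat -> nat -> Prop) : Prop := RelOk {
  r_sym : forall a b c d, R a b c d -> R c d a b;
  r_fun : forall a b c d c' d', R a b c d -> R a b c' d' -> c = c' /\ d = d';
  r_ex : forall a b, inG n a b -> exists c d, R a b c d;
  r_adj : forall a b c d, R a b c d -> adjS n a b c d }.

Section Struct.
Variables (n : nat) (R : nat -> nat -> nat -> nat -> Prop).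
Hypothesis hn : 0 < n.
Hypothesis ok : rel_ok n R.
Let Rsym := r_sym ok.
Let Rfun := r_fun ok.
Let Rex := r_ex ok.
Let Radj := r_adj ok.

Lemma Rclash a b c d a' b' c' d' : R a b c d -> R a' b' c' d' -> a = a' -> b = b' ->
  (c = c' -> d = d' -> False) -> False.
Proof. move=> H1 H2 e1 e2 H; subst; case: (Rfun H1 H2) => e3 e4; exact: H e3 e4. Qed.

Lemma Rcong a b c d a' b' c' d' : R a b c d -> a = a' -> b = b' -> c = c' -> d = d' ->
  R a' b' c' d'.
Proof. by move=> H <- <- <- <-. Qed.

Lemma part a b : inG n a b ->
  R a b (a+1) b \/ R a b (a-1) b \/ R a b a (b+1) \/ R a b a (b-1).
Proof.
move=> H; have [c [d Hr]] := Rex H; have := Radj Hr.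
rewrite /adjS /adjO /hok /vok => Ha.
have : (c = a+1 /\ d = b) \/ (c = a-1 /\ d = b) \/ (c = a /\ d = b+1) \/ (c = a /\ d = b-1)
  by lia.
by case=> [[? ?]|[[? ?]|[[? ?]|[? ?]]]]; subst; tauto.
Qed.

Ltac kill H := exfalso; have := Radj H; rewrite /adjS /adjO /hok /vok; lia.
Ltac clash H := exfalso; match goal with
  | H1 : R _ _ _ _ |- _ =>
    first [ apply: (Rclash H1 H); lia | apply: (Rclash H1 (Rsym H)); lia
          | apply: (Rclash (Rsym H1) H); lia | apply: (Rclash (Rsym H1) (Rsym H)); lia ]
  end.
Ltac pt a b := let H := fresh "H" in
  have [H|[H|[H|H]]] := part (a:=a) (b:=b) ltac:(rewrite /inG; lia);
  try (kill H; fail); try (clash H; fail).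
Ltac rexact := match goal with
  | H : R _ _ _ _ |- R _ _ _ _ => first [apply: (Rcong H); lia | apply: (Rcong (Rsym H)); lia]
  end.

Definition J i := R (4*i) 1 (4*i) 2 \/ (R (4*i) 1 (4*i+1) 1 /\ R (4*i) 2 (4*i+1) 2) \/
  (0 < i /\ R (4*i) 1 (4*i-1) 1 /\ R (4*i) 2 (4*i-1) 2).
Definition TA i := (R (4*i+1) 3 (4*i+2) 3 /\ R (4*i+3) 3 (4*i+3) 2 /\ R (4*i+1) 2 (4*i+2) 2).
Definition TB i := (R (4*i+2) 3 (4*i+3) 3 /\ R (4*i+1) 3 (4*i+1) 2 /\ R (4*i+2) 2 (4*i+3) 2).
Definition BA i := (R (4*i+1) 0 (4*i+2) 0 /\ R (4*i+3) 0 (4*i+3) 1 /\ R (4*i+1) 1 (4*i+2) 1).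
Definition BB i := (R (4*i+2) 0 (4*i+3) 0 /\ R (4*i+1) 0 (4*i+1) 1 /\ R (4*i+2) 1 (4*i+3) 1).
Definition UA i := (R (4*i) 1 (4*i+1) 1 /\ R (4*i) 2 (4*i+1) 2 /\ R (4*i+2) 1 (4*i+2) 2 /\ R (4*i+1) 3 (4*i+2) 3 /\ R (4*i+3) 3 (4*i+3) 2 /\ R (4*i+1) 0 (4*i+2) 0 /\ R (4*i+3) 0 (4*i+3) 1).
Definition UB i := (R (4*i+3) 1 (4*i+4) 1 /\ R (4*i+3) 2 (4*i+4) 2 /\ R (4*i+2) 1 (4*i+2) 2 /\ R (4*i+2) 3 (4*i+3) 3 /\ R (4*i+1) 3 (4*i+1) 2 /\ R (4*i+2) 0 (4*i+3) 0 /\ R (4*i+1) 0 (4*i+1) 1).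
Definition Unit i := UA i \/ UB i \/ ((TA i \/ TB i) /\ (BA i \/ BB i)).

Lemma L_right i : i < n -> R (4*i) 1 (4*i+1) 1 -> R (4*i) 2 (4*i+1) 2 -> UA i.
Proof.
move=> Hi H1 H2.
pt (4*i+1) 3.
pt (4*i+3) 3.
pt (4*i+2) 2.
pt (4*i+1) 0.
pt (4*i+3) 0.
repeat split; rexact.
Qed.


Lemma L_top i : i < n ->
  R (4*i) 1 (4*i) 2 \/ (0 < i /\ R (4*i) 1 (4*i-1) 1 /\ R (4*i) 2 (4*i-1) 2) ->
  TA i \/ TB i \/
  (R (4*i+2) 3 (4*i+3) 3 /\ R (4*i+1) 3 (4*i+1) 2 /\ R (4*i+2) 2 (4*i+2) 1 /\ R (4*i+3) 2 (4*i+4) 2).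
Proof.
move=> Hi Hj.
have [p1 [q1 [Hr1 Hne1]]] : exists p q, R (4*i) 1 p q /\ p <> 4*i+1.
  case: Hj => [H0|[Hp [H1 H2]]]; [exists (4*i), 2 | exists (4*i-1), 1]; split=> //; lia.
have [p2 [q2 [Hr2 Hne2]]] : exists p q, R (4*i) 2 p q /\ p <> 4*i+1.
  case: Hj => [H0|[Hp [H1 H2]]]; [exists (4*i), 1; split; [exact: Rsym|lia] | exists (4*i-1), 2; split=> //; lia].
clear Hj.
pt (4*i+2) 3.
- pt (4*i+1) 3.
  pt (4*i+2) 2.
  + right; left; repeat split; rexact.
  + pt (4*i+3) 2. right; right; repeat split; rexact.
- pt (4*i+3) 3. pt (4*i+1) 2. left; repeat split; rexact.
Qed.

Lemma L_bot i : i < n ->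
  R (4*i) 1 (4*i) 2 \/ (0 < i /\ R (4*i) 1 (4*i-1) 1 /\ R (4*i) 2 (4*i-1) 2) ->
  BA i \/ BB i \/
  (R (4*i+2) 0 (4*i+3) 0 /\ R (4*i+1) 0 (4*i+1) 1 /\ R (4*i+2) 1 (4*i+2) 2 /\ R (4*i+3) 1 (4*i+4) 1).
Proof.
move=> Hi Hj.
have [p1 [q1 [Hr1 Hne1]]] : exists p q, R (4*i) 1 p q /\ p <> 4*i+1.
  case: Hj => [H0|[Hp [H1 H2]]]; [exists (4*i), 2 | exists (4*i-1), 1]; split=> //; lia.
have [p2 [q2 [Hr2 Hne2]]] : exists p q, R (4*i) 2 p q /\ p <> 4*i+1.
  case: Hj => [H0|[Hp [H1 H2]]]; [exists (4*i), 1; split; [exact: Rsym|lia] | exists (4*i-1), 2; split=> //; lia].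
clear Hj.
pt (4*i+2) 0.
- pt (4*i+1) 0.
  pt (4*i+2) 1.
  + right; left; repeat split; rexact.
  + pt (4*i+3) 1. right; right; repeat split; rexact.
- pt (4*i+3) 0. pt (4*i+1) 1. left; repeat split; rexact.
Qed.

Lemma J0 : J 0.
Proof.
pt (4*0) 1.
- pt (4*0) 2. right; left; split; rexact.
- left; rexact.
Qed.

Ltac finJ := rewrite /J; first [left; rexact | right; left; split; rexact
   | right; right; split; [lia|split; rexact]].

Lemma Jnext i : i < n -> Unit i -> J (i+1).
Proof.
move=> Hi.
case=> [[? [? [? [? [? [? ?]]]]]]|[[? [? [? [? [? [? ?]]]]]]|[[[? [? ?]]|[? [? ?]]] [[? [? ?]]|[? [? ?]]]]]].
all: try (right; right; split; [lia|split; rexact]).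
all: pt (4*i+4) 1; first [finJ | pt (4*i+4) 2; finJ].
Qed.

Lemma unit_of i : i < n -> J i -> Unit i.
Proof.
move=> Hi Hj; case: (Hj) => [H0|[[H1 H2]|Hl]].
2: by left; apply: L_right.
all: have Hj' : R (4*i) 1 (4*i) 2 \/ (0 < i /\ R (4*i) 1 (4*i-1) 1 /\ R (4*i) 2 (4*i-1) 2) by tauto.
all: case: (L_top Hi Hj') => [HT|[HT|[T1 [T2 [T3 T4]]]]];
  case: (L_bot Hi Hj') => [HB|[HB|[B1 [B2 [B3 B4]]]]].
all: try by right; right; split; tauto.
all: try by right; left; repeat split; rexact.
all: exfalso.
all: try (case: HT => [X1 [X2 X3]]).
all: try (case: HB => [Y1 [Y2 Y3]]).
all: first [ clash B3 | clash T3 ].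
Qed.

Lemma allJ i : i <= n -> J i.
Proof.
elim: i => [|i IH] Hi; first exact: J0.
have Hi' : i < n by lia.
rewrite -addn1; apply: Jnext => //; apply: unit_of => //; apply: IH; lia.
Qed.

Lemma allU i : i < n -> Unit i.
Proof. move=> Hi; apply: unit_of => //; apply: allJ; lia. Qed.

End Struct.

Definition Pres (R1 R2 : nat -> nat -> nat -> nat -> Prop) i :=
  (UA R1 i -> UA R2 i) /\ (UB R1 i -> UB R2 i) /\ (TA R1 i -> TA R2 i) /\
  (TB R1 i -> TB R2 i) /\ (BA R1 i -> BA R2 i) /\ (BB R1 i -> BB R2 i).

Definition Keys (R1 R2 : nat -> nat -> nat -> nat -> Prop) i :=
  (UA R1 i -> R2 (4*i) 2 (4*i+1) 2) /\ (UB R1 i -> R2 (4*i+3) 2 (4*i+4) 2) /\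
  (TA R1 i -> R2 (4*i+1) 2 (4*i+2) 2) /\ (TB R1 i -> R2 (4*i+2) 2 (4*i+3) 2) /\
  (BA R1 i -> R2 (4*i+1) 1 (4*i+2) 1) /\ (BB R1 i -> R2 (4*i+2) 1 (4*i+3) 1).

Ltac clashall := exfalso; match goal with
 | Hok : rel_ok _ ?Rr, H1 : ?Rr ?a ?b _ _, H2 : ?Rr ?a ?b _ _ |- _ =>
     apply: (Rclash Hok H1 H2); [reflexivity|reflexivity|lia]
 | Hok : rel_ok _ ?Rr, H1 : ?Rr ?a ?b _ _, H2 : ?Rr _ _ ?a ?b |- _ =>
     apply: (Rclash Hok H1 (r_sym Hok H2)); [reflexivity|reflexivity|lia]
 | Hok : rel_ok _ ?Rr, H1 : ?Rr _ _ ?a ?b, H2 : ?Rr _ _ ?a ?b |- _ =>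
     apply: (Rclash Hok (r_sym Hok H1) (r_sym Hok H2)); [reflexivity|reflexivity|lia]
 end.

Ltac destr := unfold UA, UB, TA, TB, BA, BB in *;
  repeat match goal with H : _ /\ _ |- _ => case: H => ? ? end.

Section Agree1.
Variables (n : nat) (R1 R2 : nat -> nat -> nat -> nat -> Prop).
Hypothesis hn : 0 < n.
Hypothesis ok1 : rel_ok n R1.
Hypothesis ok2 : rel_ok n R2.

Lemma keys_pres i : i < n -> Keys R1 R2 i -> Pres R1 R2 i.
Proof.
move=> Hi [kA [kB [kTA [kTB [kBA kBB]]]]].
split; [|split; [|split; [|split; [|split]]]] => HX.
- have K := kA HX.
  case: (allU hn ok2 Hi) => [HA|[HB|[[HT|HT] [HBo|HBo]]]]; try done; destr; clashall.
- have K := kB HX.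
  case: (allU hn ok2 Hi) => [HA|[HB|[[HT|HT] [HBo|HBo]]]]; try done; destr; clashall.
- have K := kTA HX.
  case: (allU hn ok2 Hi) => [HA|[HB|[[HT|HT] [HBo|HBo]]]]; try done; destr; clashall.
- have K := kTB HX.
  case: (allU hn ok2 Hi) => [HA|[HB|[[HT|HT] [HBo|HBo]]]]; try done; destr; clashall.
- have K := kBA HX.
  case: (allU hn ok2 Hi) => [HA|[HB|[[HT|HT] [HBo|HBo]]]]; try done; destr; clashall.
- have K := kBB HX.
  case: (allU hn ok2 Hi) => [HA|[HB|[[HT|HT] [HBo|HBo]]]]; try done; destr; clashall.
Qed.

Lemma pres_rev i : i < n -> Pres R1 R2 i -> Pres R2 R1 i.
Proof.
move=> Hi [pA [pB [pTA [pTB [pBA pBB]]]]].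
split; [|split; [|split; [|split; [|split]]]] => HX.
all: case: (allU hn ok1 Hi) => [HA|[HB|[[HT|HT] [HBo|HBo]]]]; try done.
all: try (move/pA: HA => HA); try (move/pB: HB => HB);
     try (move/pTA: HT => HT); try (move/pTB: HT => HT);
     try (move/pBA: HBo => HBo); try (move/pBB: HBo => HBo).
all: destr; clashall.
Qed.

Ltac finish := match goal with HR : R1 ?a ?b ?c ?d |- R2 ?a ?b ?c ?d =>
  first [ match goal with H : R1 a b ?z ?w, H' : R2 a b ?z ?w |- _ =>
            have [-> ->] := r_fun ok1 HR H; exact H' end
        | match goal with H : R1 ?z ?w a b, H' : R2 ?z ?w a b |- _ =>
            have [-> ->] := r_fun ok1 HR (r_sym ok1 H); exact (r_sym ok2 H') end ]
  end.

Lemma inner (Pr : forall i, i < n -> Pres R1 R2 i) j a b c d : j < n ->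
  4*j < a < 4*j+4 -> R1 a b c d -> R2 a b c d.
Proof.
move=> Hj Ha HR.
have := r_adj ok1 HR; rewrite /adjS /adjO /hok /vok => Had.
have [?|[?|?]] : a = 4*j+1 \/ a = 4*j+2 \/ a = 4*j+3 by lia.
all: have [?|[?|[?|?]]] : b = 0 \/ b = 1 \/ b = 2 \/ b = 3 by lia.
all: subst a b; clear Had Ha.
all: have [pA [pB [pTA [pTB [pBA pBB]]]]] := Pr j Hj.
all: case: (allU hn ok1 Hj) => [HA|[HB|[[HT|HT] [HBo|HBo]]]].
all: try (have HA' := pA HA); try (have HB' := pB HB);
     try (have HT' := pTA HT); try (have HT' := pTB HT);
     try (have HBo' := pBA HBo); try (have HBo' := pBB HBo).
all: destr; finish.
Qed.

End Agree1.

Section Agree2.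
Variables (n : nat) (R1 R2 : nat -> nat -> nat -> nat -> Prop).
Hypothesis hn : 0 < n.
Hypothesis ok1 : rel_ok n R1.
Hypothesis ok2 : rel_ok n R2.
Hypothesis Pr : forall i, i < n -> Pres R1 R2 i.

Lemma Pr' : forall i, i < n -> Pres R2 R1 i.
Proof. move=> i Hi; exact: (@pres_rev n R1 R2 hn ok1 ok2 i Hi (Pr Hi)). Qed.

Lemma junc i b c d : i <= n -> (b = 1 \/ b = 2) -> R1 (4*i) b c d -> R2 (4*i) b c d.
Proof.
move=> Hi Hb HR.
have in12 := @inner n R1 R2 hn ok1 ok2 Pr.
have in21 := @inner n R2 R1 hn ok2 ok1 Pr'.
case: (allJ hn ok1 Hi) => [H0|[[H1 H2]|[Hp [H1 H2]]]].
- case: (allJ hn ok2 Hi) => [K0|[[K1 K2]|[Kp [K1 K2]]]].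
  + case: Hb => ?; subst b.
    * by have [-> ->] := r_fun ok1 HR H0.
    * have [-> ->] := r_fun ok1 HR (r_sym ok1 H0); exact (r_sym ok2 K0).
  + exfalso.
    have Hi' : i < n by have := r_adj ok2 K1; rewrite /adjS /adjO /hok /vok; lia.
    have L := in21 i (4*i+1) 1 (4*i) 1 Hi' ltac:(lia) (r_sym ok2 K1).
    apply: (Rclash ok1 (r_sym ok1 L) H0); lia.
  + exfalso.
    have Hi' : i - 1 < n by lia.
    have L := in21 (i-1) (4*i-1) 1 (4*i) 1 Hi' ltac:(lia) (r_sym ok2 K1).
    apply: (Rclash ok1 (r_sym ok1 L) H0); lia.
- have Hi' : i < n by have := r_adj ok1 H1; rewrite /adjS /adjO /hok /vok; lia.
  case: Hb => ?; subst b.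
  + have [-> ->] := r_fun ok1 HR H1; apply: (r_sym ok2).
    exact: (in12 i (4*i+1) 1 (4*i) 1 Hi' ltac:(lia) (r_sym ok1 H1)).
  + have [-> ->] := r_fun ok1 HR H2; apply: (r_sym ok2).
    exact: (in12 i (4*i+1) 2 (4*i) 2 Hi' ltac:(lia) (r_sym ok1 H2)).
- have Hi' : i - 1 < n by lia.
  case: Hb => ?; subst b.
  + have [-> ->] := r_fun ok1 HR H1; apply: (r_sym ok2).
    exact: (in12 (i-1) (4*i-1) 1 (4*i) 1 Hi' ltac:(lia) (r_sym ok1 H1)).
  + have [-> ->] := r_fun ok1 HR H2; apply: (r_sym ok2).
    exact: (in12 (i-1) (4*i-1) 2 (4*i) 2 Hi' ltac:(lia) (r_sym ok1 H2)).
Qed.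

Lemma agree a b c d : R1 a b c d -> R2 a b c d.
Proof.
move=> HR; have := r_adj ok1 HR; rewrite /adjS /adjO /hok /vok => Had.
case: (boolP (a %% 4 == 0)) => Hm.
- have Ha : a = 4 * (a %/ 4) by lia.
  rewrite Ha in HR *; apply: junc => //; lia.
- apply: (inner hn ok1 ok2 Pr (j := a %/ 4)) => //; lia.
Qed.
End Agree2.

Lemma agree_keys n (R1 R2 : nat -> nat -> nat -> nat -> Prop) : 0 < n ->
  rel_ok n R1 -> rel_ok n R2 -> (forall i, i < n -> Keys R1 R2 i) ->
  forall a b c d, R1 a b c d -> R2 a b c d.
Proof.
move=> hn ok1 ok2 K; apply: (agree hn ok1 ok2).
move=> i Hi; exact: (keys_pres hn ok2 Hi (K i Hi)).
Qed.

Lemma set2_eq (T : finType) (x y u w : T) :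
  [set x; y] = [set u; w] -> (x = u /\ y = w) \/ (x = w /\ y = u).
Proof.
move=> H.
have hx : x \in [set u; w] by rewrite -H set21.
have hy : y \in [set u; w] by rewrite -H set22.
have hu : u \in [set x; y] by rewrite H set21.
have hw : w \in [set x; y] by rewrite H set22.
case/set2P: hx => ex; case/set2P: hy => ey; subst; try tauto.
- by case/set2P: hw => ->; tauto.
- by case/set2P: hu => ->; tauto.
Qed.

Section Pyr.
Variable n : nat.
Hypothesis hn : 0 < n.
Local Notation V := (PV n).
Local Notation E := (pyrene_edges n).

Definition X (u : V) : nat := u.1.
Definition Y (u : V) : nat := u.2.

Lemma X_pv a b : a <= 4 * n -> X (pv n a b) = a.
Proof. by move=> H; rewrite /X /pv /= inordK // ltnS. Qed.
Lemma Y_pv a b : b < 4 -> Y (pv n a b) = b.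
Proof. by move=> H; rewrite /Y /pv /= inordK. Qed.
Lemma Xb u : X u <= 4 * n.
Proof. by have := ltn_ord u.1; rewrite ltnS. Qed.
Lemma Yb u : Y u < 4.
Proof. exact: ltn_ord u.2. Qed.
Lemma vert_eq u w : X u = X w -> Y u = Y w -> u = w.
Proof.
case: u => [u1 u2]; case: w => [w1 w2]; rewrite /X /Y /= => h1 h2.
by congr pair; apply: val_inj.
Qed.
Lemma pv_XY u : pv n (X u) (Y u) = u.
Proof. by apply: vert_eq; rewrite ?X_pv ?Y_pv //; [exact: Xb | exact: Yb]. Qed.
Lemma pv_inj a b c d : a <= 4 * n -> c <= 4 * n -> b < 4 -> d < 4 ->
  pv n a b = pv n c d -> a = c /\ b = d.
Proof.
move=> ha hc hb hd e; split.
- by rewrite -(X_pv b ha) -(X_pv d hc) e.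
- by rewrite -(Y_pv a hb) -(Y_pv c hd) e.
Qed.
Lemma pv_eq v a b : a <= 4 * n -> b < 4 -> X v = a -> Y v = b -> v = pv n a b.
Proof. by move=> ha hb h1 h2; apply: vert_eq; rewrite ?X_pv ?Y_pv. Qed.

Definition e6 x y u w : Prop :=
  (X u = x /\ Y u = y /\ X w = x+1 /\ Y w = y) \/
  (X u = x+1 /\ Y u = y /\ X w = x+2 /\ Y w = y) \/
  (X u = x /\ Y u = y+1 /\ X w = x+1 /\ Y w = y+1) \/
  (X u = x+1 /\ Y u = y+1 /\ X w = x+2 /\ Y w = y+1) \/
  (X u = x /\ Y u = y /\ X w = x /\ Y w = y+1) \/
  (X u = x+2 /\ Y u = y /\ X w = x+2 /\ Y w = y+1).

Lemma in_hex x y u w : x + 2 <= 4 * n -> y < 3 -> e6 x y u w ->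
  [set u; w] \in hexagon n x y.
Proof.
move=> Hx Hy.
case=> [[h1 [h2 [h3 h4]]]|[[h1 [h2 [h3 h4]]]|[[h1 [h2 [h3 h4]]]|
        [[h1 [h2 [h3 h4]]]|[[h1 [h2 [h3 h4]]]|[h1 [h2 [h3 h4]]]]]]]].
- rewrite (@pv_eq u x y); try lia. rewrite (@pv_eq w x.+1 y); try lia.
  by rewrite !inE eqxx.
- rewrite (@pv_eq u x.+1 y); try lia. rewrite (@pv_eq w x.+2 y); try lia.
  by rewrite !inE eqxx ?orbT.
- rewrite (@pv_eq u x y.+1); try lia. rewrite (@pv_eq w x.+1 y.+1); try lia.
  by rewrite !inE eqxx ?orbT.
- rewrite (@pv_eq u x.+1 y.+1); try lia. rewrite (@pv_eq w x.+2 y.+1); try lia.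
  by rewrite !inE eqxx ?orbT.
- rewrite (@pv_eq u x y); try lia. rewrite (@pv_eq w x y.+1); try lia.
  by rewrite !inE eqxx ?orbT.
- rewrite (@pv_eq u x.+2 y); try lia. rewrite (@pv_eq w x.+2 y.+1); try lia.
  by rewrite !inE eqxx ?orbT.
Qed.

Lemma hexE i x y u w : i < n ->
  (x = 4*i /\ y = 1) \/ (x = 4*i+2 /\ y = 1) \/ (x = 4*i+1 /\ y = 2) \/ (x = 4*i+1 /\ y = 0) ->
  e6 x y u w -> [set u; w] \in E.
Proof.
move=> Hi Hp He; apply/bigcupP; exists (Ordinal Hi); first by [].
change (nat_of_ord (Ordinal Hi)) with i.
case: Hp => [[? ?]|[[? ?]|[[? ?]|[? ?]]]]; subst x y.
- by apply/setUP; left; apply/setUP; left; apply/setUP; left; apply: in_hex => //; lia.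
- by apply/setUP; left; apply/setUP; left; apply/setUP; right; apply: in_hex => //; lia.
- by apply/setUP; left; apply/setUP; right; apply: in_hex => //; lia.
- by apply/setUP; right; apply: in_hex => //; lia.
Qed.

Lemma hex_mem x y e : e \in hexagon n x y -> x + 2 <= 4 * n -> y < 3 ->
  exists u w, e = [set u; w] /\ e6 x y u w.
Proof.
rewrite /hexagon !inE => H hx hy.
case/orP: H => [/orP[/orP[/orP[/orP[H|H]|H]|H]|H]|H]; move/eqP: H => ->;
  (do 2 eexists); (split; first reflexivity); rewrite /e6 !X_pv ?Y_pv; lia.
Qed.

Lemma memE e : e \in E -> exists u w, e = [set u; w] /\ adjO n (X u) (Y u) (X w) (Y w).
Proof.
case/bigcupP=> i _; have Hi := ltn_ord i.
case/setUP => [/setUP [/setUP [H|H]|H]|H];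
  have [u [w [-> He]]] := hex_mem H ltac:(lia) ltac:(lia);
  exists u, w; split=> //; move: He; rewrite /e6 /adjO /hok /vok; lia.
Qed.

Lemma adjE u w : adjO n (X u) (Y u) (X w) (Y w) -> [set u; w] \in E.
Proof.
have := Xb u; have := Xb w; have := Yb u; have := Yb w => h1 h2 h3 h4.
have [R|[R|[R|R]]] : X u %% 4 = 0 \/ X u %% 4 = 1 \/ X u %% 4 = 2 \/ X u %% 4 = 3 by lia.
all: have [B|[B|[B|B]]] : Y u = 0 \/ Y u = 1 \/ Y u = 2 \/ Y u = 3 by lia.
all: rewrite /adjO; case/orP=> /andP[/andP[/eqP hw /eqP hy] Hh]; try (exfalso; move: Hh; rewrite /hok /vok; lia).
- by apply: (@hexE (X u %/ 4) (4 * (X u %/ 4)) 1); [lia | left; lia | rewrite /e6; left; lia].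
- case: (ltnP (X u) (4 * n)) => Hx.
  + by apply: (@hexE (X u %/ 4) (4 * (X u %/ 4)) 1); [lia | left; lia | rewrite /e6; do 4 right; left; lia].
  + by apply: (@hexE (n - 1) (4 * (n - 1) + 2) 1); [lia | right; left; lia | rewrite /e6; do 5 right; lia].
- by apply: (@hexE (X u %/ 4) (4 * (X u %/ 4)) 1); [lia | left; lia | rewrite /e6; do 2 right; left; lia].
- by apply: (@hexE (X u %/ 4) (4 * (X u %/ 4) + 1) 0); [lia | do 3 right; lia | rewrite /e6; left; lia].
- by apply: (@hexE (X u %/ 4) (4 * (X u %/ 4) + 1) 0); [lia | do 3 right; lia | rewrite /e6; do 4 right; left; lia].
- by apply: (@hexE (X u %/ 4) (4 * (X u %/ 4)) 1); [lia | left; lia | rewrite /e6; right; left; lia].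
- by apply: (@hexE (X u %/ 4) (4 * (X u %/ 4)) 1); [lia | left; lia | rewrite /e6; do 3 right; left; lia].
- by apply: (@hexE (X u %/ 4) (4 * (X u %/ 4) + 1) 2); [lia | do 2 right; left; lia | rewrite /e6; do 4 right; left; lia].
- by apply: (@hexE (X u %/ 4) (4 * (X u %/ 4) + 1) 2); [lia | do 2 right; left; lia | rewrite /e6; do 2 right; left; lia].
- by apply: (@hexE (X u %/ 4) (4 * (X u %/ 4) + 1) 0); [lia | do 3 right; lia | rewrite /e6; right; left; lia].
- by apply: (@hexE (X u %/ 4) (4 * (X u %/ 4) + 2) 1); [lia | right; left; lia | rewrite /e6; left; lia].
- by apply: (@hexE (X u %/ 4) (4 * (X u %/ 4)) 1); [lia | left; lia | rewrite /e6; do 5 right; lia].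
- by apply: (@hexE (X u %/ 4) (4 * (X u %/ 4) + 2) 1); [lia | right; left; lia | rewrite /e6; do 2 right; left; lia].
- by apply: (@hexE (X u %/ 4) (4 * (X u %/ 4) + 1) 2); [lia | do 2 right; left; lia | rewrite /e6; do 3 right; left; lia].
- by apply: (@hexE (X u %/ 4) (4 * (X u %/ 4) + 1) 0); [lia | do 3 right; lia | rewrite /e6; do 5 right; lia].
- by apply: (@hexE (X u %/ 4) (4 * (X u %/ 4) + 2) 1); [lia | right; left; lia | rewrite /e6; right; left; lia].
- by apply: (@hexE (X u %/ 4) (4 * (X u %/ 4) + 2) 1); [lia | right; left; lia | rewrite /e6; do 3 right; left; lia].
- by apply: (@hexE (X u %/ 4) (4 * (X u %/ 4) + 1) 2); [lia | do 2 right; left; lia | rewrite /e6; do 5 right; lia].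
Qed.

Lemma edgeE a b c d : a <= 4 * n -> b < 4 -> c <= 4 * n -> d < 4 ->
  adjS n a b c d -> [set pv n a b; pv n c d] \in E.
Proof.
move=> ha hb hc hd /orP[] H.
- by apply: adjE; rewrite !X_pv ?Y_pv.
- by rewrite setUC; apply: adjE; rewrite !X_pv ?Y_pv.
Qed.

Lemma coverE u : (u \in cover E) = inG n (X u) (Y u).
Proof.
apply/idP/idP.
- case/bigcupP=> e eE ue; have [u0 [w0 [He Ha]]] := memE eE.
  rewrite He in ue; case/set2P: ue => ->; move: Ha; rewrite /adjO /hok /vok /inG; lia.
- move=> H.
  have := Xb u; have := Yb u => h1 h2.
  have : (X u < 4 * n) && adjO n (X u) (Y u) (X u).+1 (Y u) ||
         (0 < X u) && adjO n (X u).-1 (Y u) (X u) (Y u)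
    by move: H; rewrite /adjO /hok /vok /inG; lia.
  case/orP=> /andP[Hp Ha].
  + have Hw : [set u; pv n (X u).+1 (Y u)] \in E.
      by apply: adjE; rewrite X_pv ?Y_pv.
    by apply/bigcupP; exists [set u; pv n (X u).+1 (Y u)] => //; rewrite set21.
  + have Hw : [set pv n (X u).-1 (Y u); u] \in E.
      by apply: adjE; rewrite X_pv ?Y_pv //; lia.
    by apply/bigcupP; exists [set pv n (X u).-1 (Y u); u] => //; rewrite set22.
Qed.

Lemma E_ne e : e \in E -> e != set0.
Proof. by case/memE=> u [w [-> _]]; apply/set0Pn; exists u; rewrite set21. Qed.

Definition Rm (M : {set {set V}}) a b c d : Prop :=
  [/\ a <= 4 * n, b < 4, c <= 4 * n, d < 4 & [set pv n a b; pv n c d] \in M].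

Lemma Rm_adj M a b c d : is_perfect_matching E M -> Rm M a b c d -> adjS n a b c d.
Proof.
move=> HM [ha hb hc hd H].
have [u0 [w0 [He Ha]]] := memE (subsetP (pm_sub HM) _ H).
case: (set2_eq He) => [[e1 e2]|[e1 e2]]; subst u0 w0; rewrite /adjS.
- by rewrite !X_pv ?Y_pv // in Ha; rewrite Ha.
- by rewrite !X_pv ?Y_pv // in Ha; rewrite Ha orbT.
Qed.

Lemma Rm_ok M : is_perfect_matching E M -> rel_ok n (Rm M).
Proof.
move=> HM; constructor.
- by move=> a b c d [ha hb hc hd H]; split=> //; rewrite setUC.
- move=> a b c d c' d' H1 H2.
  have Ha := Rm_adj HM H1.
  case: H1 => ha hb hc hd H1; case: H2 => _ _ hc' hd' H2.
  have Hv : pv n a b \in cover E by apply: (cover_sub HM H1); rewrite set21.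
  have Ee := pm_uniq HM Hv H1 H2 (set21 _ _) (set21 _ _).
  case: (set2_eq Ee) => [[_ e2]|[e1 e2]].
  + exact: pv_inj e2.
  + have [? ?] := pv_inj hc ha hd hb e2; subst; move: Ha; rewrite /adjS /adjO /hok /vok; lia.
- move=> a b H.
  have ha : a <= 4 * n by move: H; rewrite /inG; lia.
  have hb : b < 4 by move: H; rewrite /inG; lia.
  have Hv : pv n a b \in cover E by rewrite coverE X_pv ?Y_pv.
  have [e [eM ve]] := pm_ex HM Hv.
  have [u0 [w0 [He _]]] := memE (subsetP (pm_sub HM) _ eM).
  rewrite He in ve eM; case/set2P: ve => Hv'.
  + exists (X w0), (Y w0); split=> //; [exact: Xb | exact: Yb |].
    by rewrite pv_XY Hv'.
  + exists (X u0), (Y u0); split=> //; [exact: Xb | exact: Yb |].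
    by rewrite pv_XY Hv' setUC.
- move=> a b c d; exact: Rm_adj.
Qed.

End Pyr.

Lemma sum_disj (T : finType) (S : {set T}) (Qf : nat -> {set T}) k :
  (forall i j x, i < j -> x \in S -> x \in Qf i -> x \in Qf j -> False) ->
  \sum_(i < k) #|S :&: Qf i| <= #|S|.
Proof.
move=> Hd.
suff -> : \sum_(i < k) #|S :&: Qf i| = #|S :&: \bigcup_(i < k) Qf i|.
  by rewrite subset_leq_card // subsetIl.
elim: k => [|k IH]; first by rewrite !big_ord0 setI0 cards0.
rewrite !big_ord_recr /= IH setIUr cardsU.
suff -> : (S :&: \bigcup_(i < k) Qf i) :&: (S :&: Qf k) = set0 by rewrite cards0 subn0.
apply/setP=> x; rewrite !inE; apply/negP => /andP[/andP[xS /bigcupP[i _ xi]] /andP[_ xk]].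
exact: (Hd i k x (ltn_ord i) xS xi xk).
Qed.

Lemma card_bigcup_le (T : finType) (A : nat -> {set T}) k :
  #|\bigcup_(i < k) A i| <= \sum_(i < k) #|A i|.
Proof.
elim: k => [|k IH]; first by rewrite !big_ord0 cards0.
rewrite !big_ord_recr /=; apply: leq_trans (leq_card_setU _ _) _.
by rewrite leq_add2r.
Qed.

Section Low.
Variable n : nat.
Hypothesis hn : 0 < n.
Local Notation V := (PV n).
Local Notation E := (pyrene_edges n).

Definition rung i : {set V} := [set pv n (4*i+2) 1; pv n (4*i+2) 2].
Definition cval (M : {set {set V}}) i := if rung i \in M then 1 else 2.
Definition csum (M : {set {set V}}) := \sum_(i < n) cval M i.
Definition Q (i : nat) : {set {set V}} := [set e : {set V} | [exists v in e, (4*i < X v) && (X v < 4*i+4)]].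

Lemma pv_eqb a b c d : a <= 4 * n -> b < 4 -> c <= 4 * n -> d < 4 ->
  (pv n a b == pv n c d) = (a == c) && (b == d).
Proof.
move=> ha hb hc hd; apply/eqP/andP.
- by move/(pv_inj ha hc hb hd) => [-> ->].
- by case=> /eqP -> /eqP ->.
Qed.

Ltac solve_uniq := rewrite /= !inE !pv_eqb; lia.

Lemma Rm_mem (M : {set {set V}}) a b c d : Rm M a b c d -> [set pv n a b; pv n c d] \in M.
Proof. by case. Qed.

Lemma hexS (M S : {set {set V}}) a1 b1 a2 b2 a3 b3 a4 b4 a5 b5 a6 b6 :
  is_perfect_matching E M -> is_forcing_set E M S ->
  uniq [:: pv n a1 b1; pv n a2 b2; pv n a3 b3; pv n a4 b4; pv n a5 b5; pv n a6 b6] ->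
  Rm M a1 b1 a2 b2 -> Rm M a3 b3 a4 b4 -> Rm M a5 b5 a6 b6 ->
  adjS n a2 b2 a3 b3 -> adjS n a4 b4 a5 b5 -> adjS n a6 b6 a1 b1 ->
  exists2 s, s \in S & s \in [set [set pv n a1 b1; pv n a2 b2];
                               [set pv n a3 b3; pv n a4 b4]; [set pv n a5 b5; pv n a6 b6]].
Proof.
move=> HM HS Hu H12 H34 H56 A23 A45 A61.
case: (H12) => ? ? ? ? _; case: (H34) => ? ? ? ? _; case: (H56) => ? ? ? ? _.
have e23 : [set pv n a2 b2; pv n a3 b3] \in E by apply: edgeE.
have e45 : [set pv n a4 b4; pv n a5 b5] \in E by apply: edgeE.
have e61 : [set pv n a6 b6; pv n a1 b1] \in E by apply: edgeE.
have := hex_force Hu HM HS (Rm_mem H12) (Rm_mem H34) (Rm_mem H56) e23 e45 e61.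
case=> [h|h|h]; eexists; (try exact: h); apply/set3P; [constructor 1|constructor 2|constructor 3]; done.
Qed.

Lemma inQ i a b c d : a <= 4*n -> b < 4 -> c <= 4*n -> d < 4 ->
  (4*i < a < 4*i+4) \/ (4*i < c < 4*i+4) -> [set pv n a b; pv n c d] \in Q i.
Proof.
move=> ha hb hc hd H; rewrite inE; apply/existsP.
case: H => H; [exists (pv n a b) | exists (pv n c d)]; rewrite !inE eqxx ?orbT /= X_pv //; lia.
Qed.

Lemma Q_disj i j e : i < j -> e \in E -> e \in Q i -> e \in Q j -> False.
Proof.
move=> Hij /(memE hn)[u [w [-> Ha]]]; rewrite !inE.
case/existsP=> v /andP[/set2P[]-> H1]; case/existsP=> v' /andP[/set2P[]-> H2];
  move: Ha H1 H2; rewrite /adjO /hok /vok; lia.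
Qed.

Lemma topY a b c d (s : {set V}) : b < 4 -> 2 <= b -> s = [set pv n a b; pv n c d] ->
  [exists v in s, 2 <= Y v].
Proof. by move=> hb hb' ->; apply/existsP; exists (pv n a b); rewrite set21 Y_pv. Qed.

Lemma botY a b c d (s : {set V}) : b <= 1 -> d <= 1 -> s = [set pv n a b; pv n c d] ->
  [forall v in s, Y v <= 1].
Proof.
move=> hb hd ->; apply/forall_inP=> v /set2P[]->; rewrite Y_pv //; lia.
Qed.

Lemma unit_lb (M S : {set {set V}}) i : is_perfect_matching E M -> is_forcing_set E M S ->
  i < n -> cval M i <= #|S :&: Q i|.
Proof.
move=> HM HS Hi; have ok := Rm_ok hn HM.
case: (allU hn ok Hi) => [HA|[HB|[HT HBo]]].
- case: HA => [H1 [H2 [H3 [H4 [H5 [H6 H7]]]]]].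
  rewrite /cval (Rm_mem H3) card_gt0; apply/set0Pn.
  have [s sS sA] := @hexS M S (4*i) 1 (4*i+1) 1 (4*i+2) 1 (4*i+2) 2 (4*i+1) 2 (4*i) 2 HM HS
     ltac:(clear -Hi; solve_uniq) H1 H3 (r_sym ok H2)
     ltac:(rewrite /adjS /adjO /hok /vok; clear -Hi; lia) ltac:(rewrite /adjS /adjO /hok /vok; clear -Hi; lia)
     ltac:(rewrite /adjS /adjO /hok /vok; clear -Hi; lia).
  exists s; rewrite inE sS /=.
  by case/set3P: sA => ->; apply: inQ; clear -Hi; lia.
- case: HB => [H1 [H2 [H3 [H4 [H5 [H6 H7]]]]]].
  rewrite /cval (Rm_mem H3) card_gt0; apply/set0Pn.
  have [s sS sA] := @hexS M S (4*i+3) 1 (4*i+4) 1 (4*i+4) 2 (4*i+3) 2 (4*i+2) 2 (4*i+2) 1 HM HS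
     ltac:(clear -Hi; solve_uniq) H1 (r_sym ok H2) (r_sym ok H3)
     ltac:(rewrite /adjS /adjO /hok /vok; clear -Hi; lia) ltac:(rewrite /adjS /adjO /hok /vok; clear -Hi; lia)
     ltac:(rewrite /adjS /adjO /hok /vok; clear -Hi; lia).
  exists s; rewrite inE sS /=.
  by case/set3P: sA => ->; apply: inQ; clear -Hi; lia.
- have [s1 [s1S s1Q s1Y]] : exists s, [/\ s \in S, s \in Q i & [exists v in s, 2 <= Y v]].
    case: HT => [[H1 [H2 H3]]|[H1 [H2 H3]]].
    + have [s sS sA] := @hexS M S (4*i+1) 3 (4*i+2) 3 (4*i+3) 3 (4*i+3) 2 (4*i+2) 2 (4*i+1) 2 HM HS
        ltac:(clear -Hi; solve_uniq) H1 H2 (r_sym ok H3)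
        ltac:(rewrite /adjS /adjO /hok /vok; clear -Hi; lia) ltac:(rewrite /adjS /adjO /hok /vok; clear -Hi; lia)
        ltac:(rewrite /adjS /adjO /hok /vok; clear -Hi; lia).
      exists s; split=> //.
      * by case/set3P: sA => ->; apply: inQ; clear -Hi; lia.
      * by case/set3P: sA => E1; apply: (topY (b := _) _ _ E1).
    + have [s sS sA] := @hexS M S (4*i+2) 3 (4*i+3) 3 (4*i+3) 2 (4*i+2) 2 (4*i+1) 2 (4*i+1) 3 HM HS
        ltac:(clear -Hi; solve_uniq) H1 (r_sym ok H3) (r_sym ok H2)
        ltac:(rewrite /adjS /adjO /hok /vok; clear -Hi; lia) ltac:(rewrite /adjS /adjO /hok /vok; clear -Hi; lia)
        ltac:(rewrite /adjS /adjO /hok /vok; clear -Hi; lia).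
      exists s; split=> //.
      * by case/set3P: sA => ->; apply: inQ; clear -Hi; lia.
      * by case/set3P: sA => E1; apply: (topY (b := _) _ _ E1).
  have [s2 [s2S s2Q s2Y]] : exists s, [/\ s \in S, s \in Q i & [forall v in s, Y v <= 1]].
    case: HBo => [[H1 [H2 H3]]|[H1 [H2 H3]]].
    + have [s sS sA] := @hexS M S (4*i+1) 0 (4*i+2) 0 (4*i+3) 0 (4*i+3) 1 (4*i+2) 1 (4*i+1) 1 HM HS
        ltac:(clear -Hi; solve_uniq) H1 H2 (r_sym ok H3)
        ltac:(rewrite /adjS /adjO /hok /vok; clear -Hi; lia) ltac:(rewrite /adjS /adjO /hok /vok; clear -Hi; lia)
        ltac:(rewrite /adjS /adjO /hok /vok; clear -Hi; lia).
      exists s; split=> //.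
      * by case/set3P: sA => ->; apply: inQ; clear -Hi; lia.
      * by case/set3P: sA => E1; apply: (botY _ _ E1).
    + have [s sS sA] := @hexS M S (4*i+2) 0 (4*i+3) 0 (4*i+3) 1 (4*i+2) 1 (4*i+1) 1 (4*i+1) 0 HM HS
        ltac:(clear -Hi; solve_uniq) H1 (r_sym ok H3) (r_sym ok H2)
        ltac:(rewrite /adjS /adjO /hok /vok; clear -Hi; lia) ltac:(rewrite /adjS /adjO /hok /vok; clear -Hi; lia)
        ltac:(rewrite /adjS /adjO /hok /vok; clear -Hi; lia).
      exists s; split=> //.
      * by case/set3P: sA => ->; apply: inQ; clear -Hi; lia.
      * by case/set3P: sA => E1; apply: (botY _ _ E1).
  have Hne : s1 != s2.
    apply/eqP=> E12; subst s2; case/exists_inP: s1Y => v vs hv.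
    by move/forall_inP: s2Y => /(_ v vs); lia.
  have -> : cval M i = 2.
    rewrite /cval; case: ifP => // Hr; exfalso.
    have Hr' : Rm M (4*i+2) 1 (4*i+2) 2 by split=> //; clear -Hi; lia.
    case: HT => [[H1 [H2 H3]]|[H1 [H2 H3]]].
    + by apply: (Rclash ok (r_sym ok Hr') (r_sym ok H3)) => //; clear -Hi; lia.
    + by apply: (Rclash ok (r_sym ok Hr') H3) => //; clear -Hi; lia.
  apply: (@leq_trans #|[set s1; s2]|); first by rewrite cards2 Hne.
  apply: subset_leq_card.
  by apply/subsetP=> x /set2P[]->; rewrite inE ?s1S ?s1Q ?s2S ?s2Q.
Qed.

Lemma LB (M S : {set {set V}}) : is_perfect_matching E M -> is_forcing_set E M S ->
  csum M <= #|S|.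
Proof.
move=> HM HS; apply: leq_trans (@sum_disj _ S Q n _).
- by apply: leq_sum => i _; apply: unit_lb.
- move=> i j x Hij xS; apply: Q_disj Hij _.
  by apply: (subsetP (pm_sub HM)); apply: (subsetP (proj1 (andP HS))).
Qed.

Lemma mem_Rm (M : {set {set V}}) a b c d : a <= 4 * n -> b < 4 -> c <= 4 * n -> d < 4 ->
  [set pv n a b; pv n c d] \in M -> Rm M a b c d.
Proof. by split. Qed.

Lemma notinM (M : {set {set V}}) a b c d p q : is_perfect_matching E M -> Rm M a b p q ->
  c <= 4 * n -> d < 4 -> (p <> c \/ q <> d) -> ([set pv n a b; pv n c d] \in M) = false.
Proof.
move=> HM H hc hd Hne; apply/negbTE/negP => Hm.
case: (H) => ha hb _ _ _.
have Hr : Rm M a b c d by split.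
have [e1 e2] := r_fun (Rm_ok hn HM) H Hr; case: Hne => //.
Qed.

Lemma notinM' (M : {set {set V}}) a b c d p q : is_perfect_matching E M -> Rm M c d p q ->
  a <= 4 * n -> b < 4 -> (p <> a \/ q <> b) -> ([set pv n a b; pv n c d] \in M) = false.
Proof. by move=> HM H ha hb Hne; rewrite setUC; apply: (notinM HM H). Qed.

Definition Sel (M : {set {set V}}) i : {set {set V}} :=
  if rung i \in M then
    [set (if [set pv n (4*i) 2; pv n (4*i+1) 2] \in M then [set pv n (4*i) 2; pv n (4*i+1) 2]
          else [set pv n (4*i+3) 2; pv n (4*i+4) 2])]
  else
    [set (if [set pv n (4*i+1) 2; pv n (4*i+2) 2] \in M then [set pv n (4*i+1) 2; pv n (4*i+2) 2]
          else [set pv n (4*i+2) 2; pv n (4*i+3) 2]);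
         (if [set pv n (4*i+1) 1; pv n (4*i+2) 1] \in M then [set pv n (4*i+1) 1; pv n (4*i+2) 1]
          else [set pv n (4*i+2) 1; pv n (4*i+3) 1])].

Definition Sf (M : {set {set V}}) := \bigcup_(i < n) Sel M i.

Lemma Sel_card M i : #|Sel M i| <= cval M i.
Proof.
rewrite /Sel /cval; case: ifP => _; first by rewrite cards1.
by rewrite cards2; case: (_ != _).
Qed.

Lemma Sf_card M : #|Sf M| <= csum M.
Proof.
apply: leq_trans (card_bigcup_le (Sel M) n) _.
by apply: leq_sum => i _; apply: Sel_card.
Qed.

Lemma Sel_facts M i : is_perfect_matching E M -> i < n ->
  (UA (Rm M) i -> [set pv n (4*i) 2; pv n (4*i+1) 2] \in Sel M i) /\
  (UB (Rm M) i -> [set pv n (4*i+3) 2; pv n (4*i+4) 2] \in Sel M i) /\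
  (TA (Rm M) i -> [set pv n (4*i+1) 2; pv n (4*i+2) 2] \in Sel M i) /\
  (TB (Rm M) i -> [set pv n (4*i+2) 2; pv n (4*i+3) 2] \in Sel M i) /\
  (BA (Rm M) i -> [set pv n (4*i+1) 1; pv n (4*i+2) 1] \in Sel M i) /\
  (BB (Rm M) i -> [set pv n (4*i+2) 1; pv n (4*i+3) 1] \in Sel M i).
Proof.
move=> HM Hi; have ok := Rm_ok hn HM.
split; [|split; [|split; [|split; [|split]]]].
- case=> [H1 [H2 [H3 _]]].
  by rewrite /Sel /rung (Rm_mem H3) (Rm_mem H2) set11.
- case=> [H1 [H2 [H3 [H4 [H5 _]]]]].
  rewrite /Sel /rung (Rm_mem H3) (notinM' HM (r_sym ok H5)) ?set11 //; clear -Hi; lia.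
- case=> [H1 [H2 H3]].
  rewrite /Sel /rung (@notinM' M (4*i+2) 1 (4*i+2) 2 _ _ HM (r_sym ok H3)); try (clear -Hi; lia).
  by rewrite (Rm_mem H3) set21.
- case=> [H1 [H2 H3]].
  rewrite /Sel /rung (@notinM' M (4*i+2) 1 (4*i+2) 2 _ _ HM H3); try (clear -Hi; lia).
  by rewrite (notinM HM (r_sym ok H2)) ?set21 //; clear -Hi; lia.
- case=> [H1 [H2 H3]].
  rewrite /Sel /rung (@notinM M (4*i+2) 1 (4*i+2) 2 _ _ HM (r_sym ok H3)); try (clear -Hi; lia).
  by rewrite (Rm_mem H3) set22.
- case=> [H1 [H2 H3]].
  rewrite /Sel /rung (@notinM M (4*i+2) 1 (4*i+2) 2 _ _ HM H3); try (clear -Hi; lia).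
  by rewrite (notinM HM (r_sym ok H2)) ?set22 //; clear -Hi; lia.
Qed.

Lemma Sel_sub M i : is_perfect_matching E M -> i < n -> Sel M i \subset M.
Proof.
move=> HM Hi; have ok := Rm_ok hn HM.
case: (allU hn ok Hi) => [HA|[HB|[HT HBo]]].
- case: HA => [H1 [H2 [H3 _]]].
  rewrite /Sel /rung (Rm_mem H3) (Rm_mem H2).
  by apply/subsetP=> x /set1P ->; exact: (Rm_mem H2).
- case: HB => [H1 [H2 [H3 [H4 [H5 _]]]]].
  rewrite /Sel /rung (Rm_mem H3) (notinM' HM (r_sym ok H5)); try (clear -Hi; lia).
  by apply/subsetP=> x /set1P ->; exact: (Rm_mem H2).
- have Hr : (rung i \in M) = false.
    case: HT => [[H1 [H2 H3]]|[H1 [H2 H3]]].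
    + by rewrite /rung (@notinM' M (4*i+2) 1 (4*i+2) 2 _ _ HM (r_sym ok H3)) //; clear -Hi; lia.
    + by rewrite /rung (@notinM' M (4*i+2) 1 (4*i+2) 2 _ _ HM H3) //; clear -Hi; lia.
  have Ht : (if [set pv n (4*i+1) 2; pv n (4*i+2) 2] \in M then [set pv n (4*i+1) 2; pv n (4*i+2) 2]
          else [set pv n (4*i+2) 2; pv n (4*i+3) 2]) \in M.
    case: HT => [[H1 [H2 H3]]|[H1 [H2 H3]]].
    + rewrite (Rm_mem H3); exact: (Rm_mem H3).
    + rewrite (notinM HM (r_sym ok H2)); try (clear -Hi; lia).
      exact: (Rm_mem H3).
  have Hb : (if [set pv n (4*i+1) 1; pv n (4*i+2) 1] \in M then [set pv n (4*i+1) 1; pv n (4*i+2) 1]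
          else [set pv n (4*i+2) 1; pv n (4*i+3) 1]) \in M.
    case: HBo => [[H1 [H2 H3]]|[H1 [H2 H3]]].
    + rewrite (Rm_mem H3); exact: (Rm_mem H3).
    + rewrite (notinM HM (r_sym ok H2)); try (clear -Hi; lia).
      exact: (Rm_mem H3).
  rewrite /Sel Hr.
  by apply/subsetP=> x /set2P[]->.
Qed.

Lemma Sf_forcing M : is_perfect_matching E M -> is_forcing_set E M (Sf M).
Proof.
move=> HM; apply: forcingI.
  by apply/bigcupsP=> i _; apply: Sel_sub.
move=> M' HM' HS'.
have Keys : forall i, i < n -> Keys (Rm M) (Rm M') i.
  move=> i Hi.
  have [fA [fB [fTA [fTB [fBA fBB]]]]] := Sel_facts HM Hi.
  have Hs : forall x, x \in Sel M i -> x \in M'.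
    move=> x hx; apply: (subsetP HS'); apply/bigcupP; exists (Ordinal Hi) => //.
  split; [|split; [|split; [|split; [|split]]]] => H; apply: mem_Rm;
    try (clear -Hi; lia); apply: Hs; auto.
apply: esym; apply: (pm_incl (E_ne hn) HM HM'); apply/subsetP=> e eM.
have eE := subsetP (pm_sub HM) e eM.
have [u [w [He _]]] := memE hn eE; subst e.
have Hr : Rm M (X u) (Y u) (X w) (Y w).
  by split; [exact: Xb | exact: Yb | exact: Xb | exact: Yb | rewrite !pv_XY].
have := agree_keys hn (Rm_ok hn HM) (Rm_ok hn HM') Keys Hr.
by case=> _ _ _ _; rewrite !pv_XY.
Qed.

Lemma fn_le M : is_perfect_matching E M -> forcing_number E M <= csum M.
Proof.
move=> HM; have HS := Sf_forcing HM.
rewrite /forcing_number.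
apply: leq_trans (Sf_card M).
elim: (index_enum _) (mem_index_enum (Sf M)) => [|a r IH] //=.
rewrite big_cons inE => /orP[/eqP <-|Hr].
  by rewrite HS geq_minl.
case: ifP => _; last exact: IH.
by rewrite geq_min IH ?orbT.
Qed.

Lemma fn_ge M : is_perfect_matching E M -> csum M <= forcing_number E M.
Proof.
move=> HM; rewrite /forcing_number.
apply: (big_ind (fun x => csum M <= x)).
- exact: (LB HM (pm_forcing_self (E_ne hn) HM)).
- by move=> x y Hx Hy; rewrite leq_min Hx Hy.
- by move=> S HS; apply: LB.
Qed.

Lemma fn_eq M : is_perfect_matching E M -> forcing_number E M = csum M.
Proof. by move=> HM; apply/eqP; rewrite eqn_leq fn_le ?fn_ge. Qed.

Lemma csum_bounds M : n <= csum M <= 2 * n.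
Proof.
rewrite /csum; apply/andP; split.
- have : \sum_(i < n) 1 <= \sum_(i < n) cval M i.
    by apply: leq_sum => i _; rewrite /cval; case: ifP.
  by rewrite big_const_ord iter_addn_0 mul1n.
- have : \sum_(i < n) cval M i <= \sum_(i < n) 2.
    by apply: leq_sum => i _; rewrite /cval; case: ifP.
  by rewrite big_const_ord iter_addn_0 mulnC.
Qed.

End Low.

Lemma sum_if N K : \sum_(i < N) (if i < K then 1 else 2) = 2 * N - minn K N.
Proof.
elim: N => [|N IH]; first by rewrite big_ord0 minn0.
rewrite big_ord_recr /=; rewrite IH; case: ifP => H; lia.
Qed.

Section Wit.
Variable n : nat.
Hypothesis hn : 0 < n.
Variable k : nat.
Hypothesis Hk : k <= n.
Local Notation V := (PV n).
Local Notation E := (pyrene_edges n).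

Definition Pm a b c d : bool :=
 ((c == a + 1) && (d == b) &&
   [|| ((b == 0) || (b == 3)) && (a %% 4 == 1) && (a < 4*n),
       ((b == 1) || (b == 2)) && (a %% 4 == 0) && (a %/ 4 < k) |
       ((b == 1) || (b == 2)) && (a %% 4 == 1) && (k <= a %/ 4) && (a < 4*n)]) ||
 ((c == a) && (d == b + 1) &&
   [|| (b == 1) && (a %% 4 == 2) && (a %/ 4 < k),
       ((b == 0) || (b == 2)) && (a %% 4 == 3) && (a < 4*n) |
       (b == 1) && (a %% 4 == 0) && (k <= a %/ 4) && (a <= 4*n)]).

Lemma Pm_adj a b c d : Pm a b c d -> adjO n a b c d.
Proof. rewrite /Pm /adjO /hok /vok; lia. Qed.

Lemma Pm_ex a b : inG n a b ->
  [|| Pm a b (a+1) b, (0 < a) && Pm (a-1) b a b, Pm a b a (b+1) | (0 < b) && Pm a (b-1) a b].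
Proof.
rewrite /inG => H.
have [?|[?|[?|?]]] : b = 0 \/ b = 1 \/ b = 2 \/ b = 3 by lia.
all: subst b.
all: have [R|[R|[R|R]]] : a %% 4 = 0 \/ a %% 4 = 1 \/ a %% 4 = 2 \/ a %% 4 = 3 by lia.
all: case: (ltnP (a %/ 4) k) => Q.
- by exfalso; lia.
- by exfalso; lia.
- by apply/orP; left; rewrite /Pm; apply/orP; left; apply/andP; split; [lia | apply/orP; left; lia].
- by apply/orP; left; rewrite /Pm; apply/orP; left; apply/andP; split; [lia | apply/orP; left; lia].
- by apply/orP; right; apply/orP; left; apply/andP; split; first lia; rewrite /Pm; apply/orP; left; apply/andP; split; [lia | apply/orP; left; lia].
- by apply/orP; right; apply/orP; left; apply/andP; split; first lia; rewrite /Pm; apply/orP; left; apply/andP; split; [lia | apply/orP; left; lia].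
- by apply/orP; right; apply/orP; right; apply/orP; left; rewrite /Pm; apply/orP; right; apply/andP; split; [lia | apply/orP; right; apply/orP; left; lia].
- by apply/orP; right; apply/orP; right; apply/orP; left; rewrite /Pm; apply/orP; right; apply/andP; split; [lia | apply/orP; right; apply/orP; left; lia].
- by apply/orP; left; rewrite /Pm; apply/orP; left; apply/andP; split; [lia | apply/orP; right; apply/orP; left; lia].
- by apply/orP; right; apply/orP; right; apply/orP; left; rewrite /Pm; apply/orP; right; apply/andP; split; [lia | apply/orP; right; apply/orP; right; lia].
- by apply/orP; right; apply/orP; left; apply/andP; split; first lia; rewrite /Pm; apply/orP; left; apply/andP; split; [lia | apply/orP; right; apply/orP; left; lia].
- by apply/orP; left; rewrite /Pm; apply/orP; left; apply/andP; split; [lia | apply/orP; right; apply/orP; right; lia].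
- by apply/orP; right; apply/orP; right; apply/orP; left; rewrite /Pm; apply/orP; right; apply/andP; split; [lia | apply/orP; left; lia].
- by apply/orP; right; apply/orP; left; apply/andP; split; first lia; rewrite /Pm; apply/orP; left; apply/andP; split; [lia | apply/orP; right; apply/orP; right; lia].
- by apply/orP; right; apply/orP; right; apply/orP; right; apply/andP; split; first lia; rewrite /Pm; apply/orP; right; apply/andP; split; [lia | apply/orP; right; apply/orP; left; lia].
- by apply/orP; right; apply/orP; right; apply/orP; right; apply/andP; split; first lia; rewrite /Pm; apply/orP; right; apply/andP; split; [lia | apply/orP; right; apply/orP; left; lia].
- by apply/orP; left; rewrite /Pm; apply/orP; left; apply/andP; split; [lia | apply/orP; right; apply/orP; left; lia].
- by apply/orP; right; apply/orP; right; apply/orP; right; apply/andP; split; first lia; rewrite /Pm; apply/orP; right; apply/andP; split; [lia | apply/orP; right; apply/orP; right; lia].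
- by apply/orP; right; apply/orP; left; apply/andP; split; first lia; rewrite /Pm; apply/orP; left; apply/andP; split; [lia | apply/orP; right; apply/orP; left; lia].
- by apply/orP; left; rewrite /Pm; apply/orP; left; apply/andP; split; [lia | apply/orP; right; apply/orP; right; lia].
- by apply/orP; right; apply/orP; right; apply/orP; right; apply/andP; split; first lia; rewrite /Pm; apply/orP; right; apply/andP; split; [lia | apply/orP; left; lia].
- by apply/orP; right; apply/orP; left; apply/andP; split; first lia; rewrite /Pm; apply/orP; left; apply/andP; split; [lia | apply/orP; right; apply/orP; right; lia].
- by apply/orP; right; apply/orP; right; apply/orP; left; rewrite /Pm; apply/orP; right; apply/andP; split; [lia | apply/orP; right; apply/orP; left; lia].
- by apply/orP; right; apply/orP; right; apply/orP; left; rewrite /Pm; apply/orP; right; apply/andP; split; [lia | apply/orP; right; apply/orP; left; lia].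
- by exfalso; lia.
- by exfalso; lia.
- by apply/orP; left; rewrite /Pm; apply/orP; left; apply/andP; split; [lia | apply/orP; left; lia].
- by apply/orP; left; rewrite /Pm; apply/orP; left; apply/andP; split; [lia | apply/orP; left; lia].
- by apply/orP; right; apply/orP; left; apply/andP; split; first lia; rewrite /Pm; apply/orP; left; apply/andP; split; [lia | apply/orP; left; lia].
- by apply/orP; right; apply/orP; left; apply/andP; split; first lia; rewrite /Pm; apply/orP; left; apply/andP; split; [lia | apply/orP; left; lia].
- by apply/orP; right; apply/orP; right; apply/orP; right; apply/andP; split; first lia; rewrite /Pm; apply/orP; right; apply/andP; split; [lia | apply/orP; right; apply/orP; left; lia].
- by apply/orP; right; apply/orP; right; apply/orP; right; apply/andP; split; first lia; rewrite /Pm; apply/orP; right; apply/andP; split; [lia | apply/orP; right; apply/orP; left; lia].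
Qed.

Ltac atomize := repeat match goal with
 | H : is_true (_ && _) |- _ => case/andP: H => ? ?
 | H : is_true (_ || _) |- _ => case/orP: H => H
 end.

Lemma Pm_uniq a b c d c' d' : Pm a b c d || Pm c d a b -> Pm a b c' d' || Pm c' d' a b ->
  (c == c') && (d == d').
Proof. rewrite /Pm => H1 H2; atomize; lia. Qed.


Definition Mk : {set {set V}} :=
  [set e in E | [exists u, exists w, (e == [set u; w]) && Pm (X u) (Y u) (X w) (Y w)]].

Lemma Mk_inc e v : e \in Mk -> v \in e -> exists o, e = [set v; o] /\
  (Pm (X v) (Y v) (X o) (Y o) || Pm (X o) (Y o) (X v) (Y v)).
Proof.
rewrite inE => /andP[_ /existsP[u /existsP[w /andP[/eqP He HP]]]]; rewrite He => /set2P[]->.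
- by exists w; rewrite HP.
- by exists u; rewrite setUC HP orbT.
Qed.

Lemma Mk_mem v w : Pm (X v) (Y v) (X w) (Y w) -> [set v; w] \in Mk.
Proof.
move=> HP; rewrite inE; apply/andP; split.
- by apply: (adjE hn); apply: Pm_adj HP.
- by apply/existsP; exists v; apply/existsP; exists w; rewrite eqxx HP.
Qed.

Lemma Mk_PM : is_perfect_matching E Mk.
Proof.
apply: pm_of.
- by apply/subsetP=> e; rewrite inE => /andP[].
- move=> v Hv; rewrite (coverE hn) in Hv.
  have := Xb v; have := Yb v => hy hx.
  case/or4P: (Pm_ex Hv) => [H|/andP[Hp H]|H|/andP[Hp H]].
  + have hb : X v + 1 <= 4 * n by move: (Pm_adj H); rewrite /adjO /hok /vok; lia.
    exists [set v; pv n (X v + 1) (Y v)]; split; last by rewrite set21.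
    by apply: Mk_mem; rewrite X_pv ?Y_pv.
  + exists [set pv n (X v - 1) (Y v); v]; split; last by rewrite set22.
    apply: Mk_mem; rewrite X_pv ?Y_pv //; lia.
  + have hb : Y v + 1 < 4 by move: (Pm_adj H); rewrite /adjO /hok /vok; lia.
    exists [set v; pv n (X v) (Y v + 1)]; split; last by rewrite set21.
    by apply: Mk_mem; rewrite X_pv ?Y_pv.
  + exists [set pv n (X v) (Y v - 1); v]; split; last by rewrite set22.
    apply: Mk_mem; rewrite X_pv ?Y_pv //; lia.
- move=> v e f _ eM fM ve vf.
  have [o1 [-> H1]] := Mk_inc eM ve.
  have [o2 [-> H2]] := Mk_inc fM vf.
  have /andP[/eqP e1 /eqP e2] := Pm_uniq H1 H2.
  by rewrite (vert_eq e1 e2).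
Qed.

Lemma rung_Mk i : i < n -> (rung n i \in Mk) = (i < k).
Proof.
move=> Hi; apply/idP/idP.
- move=> Hr; have [o [Ho HP]] := Mk_inc Hr (set21 _ _).
  case: (set2_eq Ho) => [[_ e2]|[e1 e2]].
  + rewrite -e2 !X_pv ?Y_pv in HP; try (clear -Hi; lia).
    move: HP; rewrite /Pm => HP; atomize; lia.
  + exfalso; move/(congr1 (@Y n)): e2; rewrite !Y_pv //; lia.
- move=> Hik; rewrite /rung; apply: Mk_mem; rewrite !X_pv ?Y_pv; try (clear -Hi; lia).
  by rewrite /Pm; apply/orP; right; apply/andP; split; [lia | apply/orP; left; lia].
Qed.

End Wit.

Lemma csum_Mk n k : 0 < n -> k <= n -> csum (Mk n k) = 2 * n - k.
Proof.
move=> hn Hk; rewrite /csum.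
under eq_bigr => i _ do rewrite /cval (rung_Mk hn Hk (ltn_ord i)).
rewrite sum_if; lia.
Qed.

Lemma bigmin_le (I : finType) (P : pred I) (F : I -> nat) x j :
  P j -> \big[minn/x]_(i | P i) F i <= F j.
Proof.
move=> Pj.
elim: (index_enum I) (mem_index_enum j) => [|a r IH] //=.
rewrite big_cons inE => /orP[/eqP <-|Hr]; first by rewrite Pj geq_minl.
case: ifP => _; last exact: IH.
by rewrite geq_min IH ?orbT.
Qed.

Unset Implicit Arguments.

Theorem corollary3p3 (n : nat) (hn : 1 <= n) :
  [/\ min_forcing_number (pyrene_edges n) = n,
      max_forcing_number (pyrene_edges n) = 2 * n
    & forall k : nat,
        in_forcing_spectrum (pyrene_edges n) k <-> n <= k <= 2 * n].
Proof.
have fnb : forall M, is_perfect_matching (pyrene_edges n) M ->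
    n <= forcing_number (pyrene_edges n) M <= 2 * n.
  by move=> M HM; rewrite (fn_eq hn HM) csum_bounds.
have wit : forall v, n <= v <= 2 * n -> exists M, is_perfect_matching (pyrene_edges n) M /\
    forcing_number (pyrene_edges n) M = v.
  move=> v /andP[h1 h2].
  have Hk : 2 * n - v <= n by lia.
  exists (Mk n (2 * n - v)); split; first exact: Mk_PM.
  rewrite (fn_eq hn (Mk_PM hn Hk)) csum_Mk //; lia.
split.
- rewrite /min_forcing_number; apply/eqP; rewrite eqn_leq; apply/andP; split.
  + have [M0 [HM0 H0]] := wit n ltac:(lia).
    apply: leq_trans (bigmin_le _ _ HM0) _.
    by rewrite H0.
  + apply: (big_ind (fun y => n <= y)).
    * have [M0 [HM0 H0]] := wit n ltac:(lia).
      have := LB hn HM0 (pm_forcing_self (E_ne hn) HM0).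
      rewrite -(fn_eq hn HM0) H0 => h.
      exact: leq_trans h (subset_leq_card (pm_sub HM0)).
    * by move=> x y hx hy; rewrite leq_min hx hy.
    * by move=> M HM; case/andP: (fnb M HM).
- rewrite /max_forcing_number; apply/eqP; rewrite eqn_leq; apply/andP; split.
  + by apply/bigmax_leqP => M HM; case/andP: (fnb M HM).
  + have [M2 [HM2 H2]] := wit (2 * n) ltac:(lia).
    apply: leq_trans (leq_bigmax_cond _ HM2).
    by rewrite H2.
- move=> k; split.
  + by case=> M [HM <-]; exact: fnb.
  + by move=> Hk; have [M [HM HMk]] := wit k Hk; exists M.
Qed.
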